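(* Under Assumptions (A1), (A2), (A3), for every $\mu\in\mathbb{R}$ the function $H$ belongs to $C^{2}(\mathbb{R})$ and $$L_H:=\sup_{x\in\mathbb{R}}|H(x)+\mu|+\sup_{x\in\mathbb{R}}|H'(x)|+\sup_{x\in\mathbb{R}}|H''(x)|<\infty,$$ and $L_H$ does not depend on $\mu$. In particular $H$ and $H'$ are globally Lipschitz continuous with Lipschitz constants bounded by $L_H$, and $\sup_{x\in\mathbb{R}}|H(x)|\le L_H+|\mu|$.
   Context: Let $l<r$ be real numbers and $f,g:\mathbb{R}\to\mathbb{R}$. Assumption (A1): the restriction of $f$ to $[l,r]$ belongs to $C^{2}([l,r])$. Assumption (A2): the restriction of $g$ to $[l,r]$ belongs to $C^{3}([l,r])$, $g(x)>0$ for every $x\in(l,r)$, and for every $w_0\in(l,r)$ one has $\int_{w_0}^{l}\frac{1}{g(w)}\,dw=-\infty$ and $\int_{w_0}^{r}\frac{1}{g(w)}\,dw=+\infty$. Assumption (A3): the limits $\lim_{x\searrow l}f(x)/g(x)$ and $\lim_{x\nearrow r}f(x)/g(x)$ exist and are finite. Fix $w_0\in(l,r)$ and define $\Phi:(l,r)\to\mathbb{R}$, $\Phi(x)=\int_{w_0}^{x}\frac{1}{g(w)}\,dw$ (a bijection onto $\mathbb{R}$ under (A2)). For $\mu\in\mathbb{R}$ define, for $x\in\mathbb{R}$, $\tilde H(x)=\frac{f(\Phi^{-1}(x))}{g(\Phi^{-1}(x))}-\frac12 g'(\Phi^{-1}(x))$ and $H(x)=\tilde H(x)-\mu$. *)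

(* Defs.v *)
From Stdlib Require Import Reals Lra ClassicalEpsilon.
From Coquelicot Require Import Coquelicot.
Open Scope R_scope.

Definition Icc (l r x : R) : Prop := l <= x <= r.

(* F has derivative d at x within [l,r] (one-sided at the endpoints) *)
Definition deriv_within (l r : R) (F : R -> R) (x d : R) : Prop :=
  filterlim (fun y => (F y - F x) / (y - x))
    (within (fun y => Icc l r y /\ y <> x) (locally x)) (locally d).

Definition cont_within (l r : R) (F : R -> R) (x : R) : Prop :=
  filterlim F (within (Icc l r) (locally x)) (locally (F x)).

Definition C2_on (l r : R) (F : R -> R) : Prop :=
  exists F1 F2 : R -> R,
    (forall x, Icc l r x -> deriv_within l r F x (F1 x)) /\
    (forall x, Icc l r x -> deriv_within l r F1 x (F2 x)) /\
    (forall x, Icc l r x -> cont_within l r F2 x).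

Definition C3_on (l r : R) (F : R -> R) : Prop :=
  exists F1 F2 F3 : R -> R,
    (forall x, Icc l r x -> deriv_within l r F x (F1 x)) /\
    (forall x, Icc l r x -> deriv_within l r F1 x (F2 x)) /\
    (forall x, Icc l r x -> deriv_within l r F2 x (F3 x)) /\
    (forall x, Icc l r x -> cont_within l r F3 x).

Definition Assum_A1 (l r : R) (f : R -> R) : Prop := C2_on l r f.

(* Assumption (Assum_A2): the improper integrals are understood as limits of
   Riemann integrals over compact subintervals of (l,r). *)
Definition Assum_A2 (l r : R) (g : R -> R) : Prop :=
  C3_on l r g /\
  (forall x, l < x < r -> 0 < g x) /\
  (forall w0, l < w0 < r ->
     filterlim (fun x => RInt (fun w => / g w) w0 x) (at_right l)
       (Rbar_locally m_infty) /\
     filterlim (fun x => RInt (fun w => / g w) w0 x) (at_left r)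
       (Rbar_locally p_infty)).

Definition Assum_A3 (l r : R) (f g : R -> R) : Prop :=
  (exists a : R, filterlim (fun x => f x / g x) (at_right l) (locally a)) /\
  (exists b : R, filterlim (fun x => f x / g x) (at_left r) (locally b)).

Definition Phi (g : R -> R) (w0 x : R) : R := RInt (fun w => / g w) w0 x.

(* Phi^{-1} : R -> (l,r), chosen by Hilbert's epsilon: the (unique, under (Assum_A2))
   y in (l,r) with Phi y = x. *)
Definition Phi_inv (l r : R) (g : R -> R) (w0 x : R) : R :=
  epsilon (inhabits 0) (fun y => l < y < r /\ Phi g w0 y = x).

Definition Htilde (l r : R) (f g : R -> R) (w0 x : R) : R :=
  let y := Phi_inv l r g w0 x in f y / g y - / 2 * Derive g y.

Definition Hfun (l r : R) (f g : R -> R) (w0 mu x : R) : R :=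
  Htilde l r f g w0 x - mu.

Definition sup_abs (F : R -> R) : Rbar :=
  Lub_Rbar (fun y => exists x, y = Rabs (F x)).

Definition C2_R (F : R -> R) : Prop :=
  forall x, ex_derive F x /\ ex_derive (Derive F) x /\
            continuous (Derive (Derive F)) x.

(* Main.v *)
Require Import Defs.
From Stdlib Require Import Reals Lra ClassicalEpsilon FunctionalExtensionality.
From Coquelicot Require Import Coquelicot.
Open Scope R_scope.

Lemma interior_locally (l r y : R) : l < y < r -> locally y (fun z => l < z < r).
Proof.
  intros Hy.
  assert (Hd : 0 < Rmin (y - l) (r - y)) by (apply Rmin_pos; lra).
  exists (mkposreal _ Hd). intros z Hz. cbn in Hz. unfold ball in Hz; cbn in Hz.
  unfold AbsRing_ball, abs, minus, plus, opp in Hz; cbn in Hz.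
  pose proof (Rmin_l (y - l) (r - y)). pose proof (Rmin_r (y - l) (r - y)).
  apply Rabs_def2 in Hz. lra.
Qed.


Lemma ball_R (x e y : R) : ball x e y <-> Rabs (y - x) < e.
Proof. reflexivity. Qed.

Lemma deriv_within_interior (l r : R) (F : R -> R) (x d : R) :
  l < x < r -> deriv_within l r F x d -> is_derive F x d.
Proof.
  intros Hx H. apply is_derive_Reals. intros eps Heps.
  pose proof (proj1 (filterlim_locally _ _) H (mkposreal _ Heps)) as H1.
  destruct H1 as [del Hdel].
  assert (Hd : 0 < Rmin del (Rmin (x - l) (r - x))).
  { apply Rmin_pos. apply cond_pos. apply Rmin_pos; lra. }
  exists (mkposreal _ Hd). intros h Hh0 Hh. cbn in Hh.
  pose proof (Rmin_l del (Rmin (x - l) (r - x))).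
  pose proof (Rmin_r del (Rmin (x - l) (r - x))).
  pose proof (Rmin_l (x - l) (r - x)). pose proof (Rmin_r (x - l) (r - x)).
  apply Rabs_def2 in Hh as Hh'.
  assert (Hb : ball x del (x + h)).
  { apply ball_R. replace (x + h - x) with h by ring. lra. }
  specialize (Hdel (x + h) Hb). cbn in Hdel.
  assert (HI : Icc l r (x + h) /\ x + h <> x) by (unfold Icc; split; lra).
  specialize (Hdel HI). apply ball_R in Hdel.
  replace (x + h - x) with h in Hdel by ring. exact Hdel.
Qed.

Lemma cont_within_interior (l r : R) (F : R -> R) (x : R) :
  l < x < r -> cont_within l r F x -> continuous F x.
Proof.
  intros Hx H. apply continuity_pt_filterlim. apply continuity_pt_locally.
  intros eps. pose proof (proj1 (filterlim_locally _ _) H eps) as [del Hdel].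
  assert (Hd : 0 < Rmin del (Rmin (x - l) (r - x))).
  { apply Rmin_pos. apply cond_pos. apply Rmin_pos; lra. }
  exists (mkposreal _ Hd). intros y Hy.
  change (Rabs (y - x) < Rmin del (Rmin (x - l) (r - x))) in Hy.
  pose proof (Rmin_l del (Rmin (x - l) (r - x))).
  pose proof (Rmin_r del (Rmin (x - l) (r - x))).
  pose proof (Rmin_l (x - l) (r - x)). pose proof (Rmin_r (x - l) (r - x)).
  apply Rabs_def2 in Hy as Hy'.
  apply (Hdel y). apply ball_R. lra. unfold Icc; lra.
Qed.

Lemma deriv_within_cont (l r : R) (F : R -> R) (x d : R) :
  deriv_within l r F x d -> cont_within l r F x.
Proof.
  intros H. unfold cont_within. apply filterlim_locally. intros eps.
  pose proof (proj1 (filterlim_locally _ _) H (mkposreal _ Rlt_0_1)) as [del Hdel].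
  assert (Hd : 0 < Rmin del (eps / (Rabs d + 1))).
  { apply Rmin_pos. apply cond_pos. apply Rdiv_lt_0_compat. apply cond_pos.
    pose proof (Rabs_pos d); lra. }
  exists (mkposreal _ Hd). intros y Hy HI. apply ball_R.
  change (Rabs (y - x) < Rmin del (eps / (Rabs d + 1))) in Hy.
  pose proof (Rmin_l del (eps / (Rabs d + 1))).
  pose proof (Rmin_r del (eps / (Rabs d + 1))).
  destruct (Req_dec y x) as [E|E].
  { subst. replace (F x - F x) with 0 by ring. rewrite Rabs_R0. apply cond_pos. }
  assert (Hb : ball x del y) by (apply ball_R; lra).
  specialize (Hdel y Hb (conj HI E)). change (Rabs ((F y - F x) / (y - x) - d) < 1) in Hdel.
  assert (Hyx : y - x <> 0) by lra.
  replace (F y - F x) with ((F y - F x) / (y - x) * (y - x)) by (field; auto).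
  rewrite Rabs_mult.
  assert (Rabs ((F y - F x) / (y - x)) <= Rabs d + 1).
  { pose proof (Rabs_triang_inv ((F y - F x) / (y - x)) d). lra. }
  apply Rle_lt_trans with ((Rabs d + 1) * Rabs (y - x)).
  apply Rmult_le_compat_r. apply Rabs_pos. auto.
  apply Rlt_le_trans with ((Rabs d + 1) * (eps / (Rabs d + 1))).
  apply Rmult_lt_compat_l. pose proof (Rabs_pos d); lra. lra.
  right. field. pose proof (Rabs_pos d); lra.
Qed.


Definition clamp (l r y : R) := Rmax l (Rmin r y).

Lemma clamp_Icc l r y : l <= r -> Icc l r (clamp l r y).
Proof.
  intros H. unfold clamp, Icc. split. apply Rmax_l.
  apply Rmax_lub. lra. apply Rmin_l.
Qed.

Lemma clamp_lip l r y c : Icc l r c -> Rabs (clamp l r y - c) <= Rabs (y - c).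
Proof.
  unfold Icc, clamp; intros Hc.
  unfold Rmax, Rmin; repeat destruct Rle_dec; unfold Rabs; repeat destruct Rcase_abs; lra.
Qed.

Lemma clamp_id l r c : Icc l r c -> clamp l r c = c.
Proof. unfold Icc, clamp, Rmax, Rmin; intros; repeat destruct Rle_dec; lra. Qed.

Lemma bounded_Icc (l r : R) (F : R -> R) :
  l <= r -> (forall x, Icc l r x -> cont_within l r F x) ->
  exists M, forall x, Icc l r x -> Rabs (F x) <= M.
Proof.
  intros Hlr HF.
  set (G := fun y => Rabs (F (clamp l r y))).
  assert (HG : forall c, l <= c <= r -> continuity_pt G c).
  { intros c Hc. apply continuity_pt_locally. intros eps.
    destruct (proj1 (filterlim_locally _ _) (HF c Hc) eps) as [del Hdel].
    exists del. intros y Hy. change (Rabs (y - c) < del) in Hy.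
    unfold G. rewrite (clamp_id l r c Hc).
    eapply Rle_lt_trans. apply Rabs_triang_inv2.
    apply (Hdel (clamp l r y)).
    - apply ball_R. eapply Rle_lt_trans. apply clamp_lip; auto. auto.
    - apply clamp_Icc; auto. }
  destruct (continuity_ab_maj G l r Hlr HG) as [Mx [HM _]].
  exists (G Mx). intros x Hx. specialize (HM x Hx). unfold G in HM.
  rewrite clamp_id in HM; auto.
Qed.

Lemma bounded_open (l r : R) (q : R -> R) : l < r ->
  (forall y, l < y < r -> continuous q y) ->
  (exists a, filterlim q (at_right l) (locally a)) ->
  (exists b, filterlim q (at_left r) (locally b)) ->
  exists M, forall y, l < y < r -> Rabs (q y) <= M.
Proof.
  intros Hlr Hc [a Ha] [b Hb].
  destruct (proj1 (filterlim_locally _ _) Ha (mkposreal _ Rlt_0_1)) as [d1 H1].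
  destruct (proj1 (filterlim_locally _ _) Hb (mkposreal _ Rlt_0_1)) as [d2 H2].
  set (e := Rmin d1 (Rmin d2 ((r - l) / 2)) / 2).
  assert (He : 0 < e).
  { unfold e. apply Rdiv_lt_0_compat; [|lra]. apply Rmin_pos. apply cond_pos.
    apply Rmin_pos. apply cond_pos. lra. }
  assert (He1 : e < d1).
  { unfold e. pose proof (Rmin_l d1 (Rmin d2 ((r - l) / 2))).
    pose proof (cond_pos d1). lra. }
  assert (He2 : e < d2).
  { unfold e. pose proof (Rmin_r d1 (Rmin d2 ((r - l) / 2))).
    pose proof (Rmin_l d2 ((r - l) / 2)). pose proof (cond_pos d2). lra. }
  assert (He3 : e <= (r - l) / 4).
  { unfold e. pose proof (Rmin_r d1 (Rmin d2 ((r - l) / 2))).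
    pose proof (Rmin_r d2 ((r - l) / 2)). lra. }
  assert (Hab : l + e <= r - e) by lra.
  assert (HG : forall c, l + e <= c <= r - e -> continuity_pt (fun y => Rabs (q y)) c).
  { intros c Hc'. apply (continuity_pt_comp q Rabs).
    apply continuity_pt_filterlim. apply Hc. lra. apply Rcontinuity_abs. }
  destruct (continuity_ab_maj _ _ _ Hab HG) as [Mx [HM _]].
  exists (Rmax (Rabs (q Mx)) (Rmax (Rabs a + 1) (Rabs b + 1))).
  intros y Hy.
  pose proof (Rmax_l (Rabs (q Mx)) (Rmax (Rabs a + 1) (Rabs b + 1))).
  pose proof (Rmax_r (Rabs (q Mx)) (Rmax (Rabs a + 1) (Rabs b + 1))).
  pose proof (Rmax_l (Rabs a + 1) (Rabs b + 1)).
  pose proof (Rmax_r (Rabs a + 1) (Rabs b + 1)).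
  destruct (Rle_dec y (l + e)) as [Y1|Y1].
  { assert (Hball : ball l d1 y).
    { apply ball_R. rewrite Rabs_right; lra. }
    specialize (H1 y Hball (proj1 Hy)). change (Rabs (q y - a) < 1) in H1.
    pose proof (Rabs_triang_inv (q y) a). lra. }
  destruct (Rle_dec (r - e) y) as [Y2|Y2].
  { assert (Hball : ball r d2 y).
    { apply ball_R. rewrite Rabs_left1; lra. }
    specialize (H2 y Hball (proj2 Hy)). change (Rabs (q y - b) < 1) in H2.
    pose proof (Rabs_triang_inv (q y) b). lra. }
  specialize (HM y). cbn in HM. assert (Rabs (q y) <= Rabs (q Mx)) by (apply HM; lra).
  lra.
Qed.

Lemma cont_inv_g (l r : R) (g : R -> R) :
  (forall y, l < y < r -> continuous g y) -> (forall y, l < y < r -> 0 < g y) ->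
  forall y, l < y < r -> continuous (fun w => / g w) y.
Proof.
  intros Hc Hp y Hy. apply continuous_Rinv_comp. auto. specialize (Hp y Hy). lra.
Qed.

Lemma Phi_deriv (l r : R) (g : R -> R) (w0 : R) :
  l < w0 < r ->
  (forall y, l < y < r -> continuous g y) -> (forall y, l < y < r -> 0 < g y) ->
  forall x, l < x < r -> is_derive (Phi g w0) x (/ g x).
Proof.
  intros Hw Hc Hp x Hx. unfold Phi.
  apply (is_derive_RInt (fun w => / g w) (RInt (fun w => / g w) w0) w0 x).
  - generalize (interior_locally l r x Hx). apply filter_imp. intros b Hb.
    apply (RInt_correct (V:=R_CompleteNormedModule)). apply (ex_RInt_continuous (V:=R_CompleteNormedModule)). intros z Hz.
    apply (cont_inv_g l r); auto.
    pose proof (Rmin_l w0 b). pose proof (Rmin_r w0 b).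
    pose proof (Rmax_l w0 b). pose proof (Rmax_r w0 b).
    destruct (Rle_dec w0 b).
    + rewrite Rmin_left in Hz by lra. rewrite Rmax_right in Hz by lra. lra.
    + rewrite Rmin_right in Hz by lra. rewrite Rmax_left in Hz by lra. lra.
  - apply (cont_inv_g l r); auto.
Qed.

Lemma Phi_strict (l r : R) (g : R -> R) (w0 : R) :
  l < w0 < r ->
  (forall y, l < y < r -> continuous g y) -> (forall y, l < y < r -> 0 < g y) ->
  forall a b, l < a -> a < b -> b < r -> Phi g w0 a < Phi g w0 b.
Proof.
  intros Hw Hc Hp a b Ha Hab Hb.
  destruct (MVT_cor2 (Phi g w0) (fun x => / g x) a b Hab) as [c [Hc1 Hc2]].
  { intros c Hc'. apply is_derive_Reals. apply (Phi_deriv l r); auto. lra. }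
  assert (0 < / g c). { apply Rinv_0_lt_compat. apply Hp. lra. }
  assert (0 < / g c * (b - a)) by (apply Rmult_lt_0_compat; lra). lra.
Qed.

Lemma Phi_surj (l r : R) (g : R -> R) (w0 : R) :
  l < w0 < r ->
  (forall y, l < y < r -> continuous g y) -> (forall y, l < y < r -> 0 < g y) ->
  filterlim (fun x => RInt (fun w => / g w) w0 x) (at_right l) (Rbar_locally m_infty) ->
  filterlim (fun x => RInt (fun w => / g w) w0 x) (at_left r) (Rbar_locally p_infty) ->
  forall t, exists y, l < y < r /\ Phi g w0 y = t.
Proof.
  intros Hw Hc Hp Hl Hr t.
  assert (H1 := Hl (fun z => z < t) (ex_intro _ t (fun x Hx => Hx))).
  assert (H2 := Hr (fun z => t < z) (ex_intro _ t (fun x Hx => Hx))).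
  destruct H1 as [d1 H1]. destruct H2 as [d2 H2].
  set (y1 := l + Rmin d1 (w0 - l) / 2).
  set (y2 := r - Rmin d2 (r - w0) / 2).
  assert (0 < Rmin d1 (w0 - l)) by (apply Rmin_pos; [apply cond_pos|lra]).
  assert (0 < Rmin d2 (r - w0)) by (apply Rmin_pos; [apply cond_pos|lra]).
  pose proof (Rmin_l d1 (w0 - l)). pose proof (Rmin_r d1 (w0 - l)).
  pose proof (Rmin_l d2 (r - w0)). pose proof (Rmin_r d2 (r - w0)).
  assert (Hy1 : Phi g w0 y1 < t).
  { apply (H1 y1). apply ball_R. unfold y1. rewrite Rabs_right; lra. unfold y1; lra. }
  assert (Hy2 : t < Phi g w0 y2).
  { apply (H2 y2). apply ball_R. unfold y2. rewrite Rabs_left1; lra. unfold y2; lra. }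
  assert (Hy12 : y1 < y2) by (unfold y1, y2; lra).
  destruct (Ranalysis5.IVT_interv (fun y => Phi g w0 y - t) y1 y2) as [z [Hz1 Hz2]].
  - intros a Ha. apply continuity_pt_minus. apply continuity_pt_filterlim.
    apply (ex_derive_continuous (V:=R_NormedModule)). eexists. apply (Phi_deriv l r); auto.
    unfold y1, y2 in *; lra. apply continuity_pt_const. intros u v; auto.
  - auto.
  - lra.
  - lra.
  - exists z. split. unfold y1, y2 in *; lra. lra.
Qed.

Lemma Phi_inv_all (l r : R) (g : R -> R) (w0 : R) :
  l < w0 < r ->
  (forall y, l < y < r -> continuous g y) -> (forall y, l < y < r -> 0 < g y) ->
  filterlim (fun x => RInt (fun w => / g w) w0 x) (at_right l) (Rbar_locally m_infty) ->
  filterlim (fun x => RInt (fun w => / g w) w0 x) (at_left r) (Rbar_locally p_infty) ->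
  (forall x, l < Phi_inv l r g w0 x < r /\ Phi g w0 (Phi_inv l r g w0 x) = x) /\
  (forall a b, a <= b -> Phi_inv l r g w0 a <= Phi_inv l r g w0 b) /\
  (forall x, continuity_pt (Phi_inv l r g w0) x) /\
  (forall x, is_derive (Phi_inv l r g w0) x (g (Phi_inv l r g w0 x))).
Proof.
  intros Hw Hc Hp Hl Hr.
  set (P := Phi_inv l r g w0).
  assert (HS : forall x, l < P x < r /\ Phi g w0 (P x) = x).
  { intros x. unfold P, Phi_inv. apply epsilon_spec. apply (Phi_surj l r); auto. }
  assert (Hst := Phi_strict l r g w0 Hw Hc Hp).
  assert (HM : forall a b, a <= b -> P a <= P b).
  { intros a b Hab. destruct (HS a) as [Ha1 Ha2]. destruct (HS b) as [Hb1 Hb2].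
    destruct (Rle_dec (P a) (P b)) as [E|E]; auto.
    assert (Phi g w0 (P b) < Phi g w0 (P a)) by (apply Hst; lra). lra. }
  assert (HC : forall x, continuity_pt P x).
  { intros x. apply continuity_pt_locally. intros eps.
    destruct (HS x) as [Hx1 Hx2]. set (y := P x) in *.
    set (e := Rmin eps (Rmin (y - l) (r - y)) / 2).
    assert (0 < Rmin eps (Rmin (y - l) (r - y))).
    { apply Rmin_pos. apply cond_pos. apply Rmin_pos; lra. }
    pose proof (Rmin_l eps (Rmin (y - l) (r - y))).
    pose proof (Rmin_r eps (Rmin (y - l) (r - y))).
    pose proof (Rmin_l (y - l) (r - y)). pose proof (Rmin_r (y - l) (r - y)).
    assert (He : 0 < e) by (unfold e; lra).
    assert (Hlo : Phi g w0 (y - e) < x).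
    { rewrite <- Hx2. apply Hst; unfold e in *; lra. }
    assert (Hhi : x < Phi g w0 (y + e)).
    { rewrite <- Hx2. apply Hst; unfold e in *; lra. }
    assert (Hd : 0 < Rmin (x - Phi g w0 (y - e)) (Phi g w0 (y + e) - x)).
    { apply Rmin_pos; lra. }
    exists (mkposreal _ Hd). intros z Hz.
    change (Rabs (z - x) < Rmin (x - Phi g w0 (y - e)) (Phi g w0 (y + e) - x)) in Hz.
    pose proof (Rmin_l (x - Phi g w0 (y - e)) (Phi g w0 (y + e) - x)).
    pose proof (Rmin_r (x - Phi g w0 (y - e)) (Phi g w0 (y + e) - x)).
    apply Rabs_def2 in Hz.
    destruct (HS z) as [Hz1 Hz2].
    assert (A1 : y - e < P z).
    { destruct (Rlt_dec (y - e) (P z)) as [E|E]; auto.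
      destruct (Req_dec (P z) (y - e)) as [E'|E'].
      - rewrite E' in Hz2. lra.
      - assert (Phi g w0 (P z) < Phi g w0 (y - e)) by (apply Hst; unfold e in *; lra).
        lra. }
    assert (A2 : P z < y + e).
    { destruct (Rlt_dec (P z) (y + e)) as [E|E]; auto.
      destruct (Req_dec (P z) (y + e)) as [E'|E'].
      - rewrite E' in Hz2. lra.
      - assert (Phi g w0 (y + e) < Phi g w0 (P z)) by (apply Hst; unfold e in *; lra).
        lra. }
    apply Rabs_def1; unfold e in *; lra. }
  split; [exact HS|]. split; [exact HM|]. split; [exact HC|].
  intros x.
  assert (Prf : forall a, P (x - 1) <= a <= P (x + 1) -> derivable_pt (Phi g w0) a).
  { intros a Ha. apply ex_derive_Reals_0. eexists. apply (Phi_deriv l r); auto.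
    destruct (HS (x - 1)). destruct (HS (x + 1)). lra. }
  assert (Hinc : P (x - 1) <= P x <= P (x + 1)) by (split; apply HM; lra).
  pose proof (Ranalysis5.derivable_pt_lim_recip_interv (Phi g w0) P (x - 1) (x + 1) x
    Prf (HC x) ltac:(lra) ltac:(lra) Hinc) as HD.
  destruct (HS x) as [Hx1 Hx2].
  assert (HDv : derive_pt (Phi g w0) (P x) (Prf (P x) Hinc) = / g (P x)).
  { rewrite Derive_Reals. apply is_derive_unique. apply (Phi_deriv l r); auto. }
  rewrite HDv in HD.
  assert (Hg : 0 < g (P x)) by auto.
  apply is_derive_Reals.
  replace (g (P x)) with (1 / / g (P x)) by (field; lra).
  apply HD.
  - intros x0 _. unfold comp, id. apply (HS x0).
  - apply Rgt_not_eq. apply Rinv_0_lt_compat. auto.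
Qed.

Lemma sup_abs_fin (F : R -> R) (M : R) : (forall x, Rabs (F x) <= M) ->
  exists s, sup_abs F = Finite s /\ (forall x, Rabs (F x) <= s) /\ 0 <= s.
Proof.
  intros HM. unfold sup_abs.
  destruct (Lub_Rbar_correct (fun y => exists x, y = Rabs (F x))) as [Hub Hlub].
  assert (Hle : Rbar_le (Lub_Rbar (fun y => exists x, y = Rabs (F x))) M).
  { apply Hlub. intros y [x ->]. apply HM. }
  assert (Hge : Rbar_le (Rabs (F 0)) (Lub_Rbar (fun y => exists x, y = Rabs (F x)))).
  { apply Hub. exists 0. auto. }
  destruct (Lub_Rbar (fun y => exists x, y = Rabs (F x))) as [s| |]; cbn in Hle, Hge;
    try contradiction.
  exists s. split; auto. split.
  - intros x. assert (H := Hub (Rabs (F x)) (ex_intro _ x eq_refl)). exact H.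
  - pose proof (Rabs_pos (F 0)). lra.
Qed.

Lemma cont_plus (f g : R -> R) x : continuous f x -> continuous g x ->
  continuous (fun y => f y + g y) x.
Proof. intros; apply (continuous_plus f g); auto. Qed.
Lemma cont_minus (f g : R -> R) x : continuous f x -> continuous g x ->
  continuous (fun y => f y - g y) x.
Proof. intros; apply (continuous_minus f g); auto. Qed.
Lemma cont_mult (f g : R -> R) x : continuous f x -> continuous g x ->
  continuous (fun y => f y * g y) x.
Proof. intros; apply (continuous_mult f g); auto. Qed.
Lemma cont_div (f g : R -> R) x : continuous f x -> continuous g x -> g x <> 0 ->
  continuous (fun y => f y / g y) x.
Proof. intros; apply (continuous_mult f (fun y => / g y)); auto.
  apply continuous_Rinv_comp; auto. Qed.
Lemma cont_const (c x : R) : continuous (fun _ => c) x.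
Proof. apply continuous_const. Qed.

Definition bnd (l r : R) (F : R -> R) := exists M, forall y, l < y < r -> Rabs (F y) <= M.

Lemma bnd_plus l r f g : bnd l r f -> bnd l r g -> bnd l r (fun y => f y + g y).
Proof. intros [M1 H1] [M2 H2]. exists (M1 + M2). intros y Hy.
  eapply Rle_trans. apply Rabs_triang. specialize (H1 y Hy); specialize (H2 y Hy); lra. Qed.
Lemma bnd_minus l r f g : bnd l r f -> bnd l r g -> bnd l r (fun y => f y - g y).
Proof. intros [M1 H1] [M2 H2]. exists (M1 + M2). intros y Hy.
  eapply Rle_trans. apply Rabs_triang. rewrite Rabs_Ropp.
  specialize (H1 y Hy); specialize (H2 y Hy); lra. Qed.
Lemma bnd_mult l r f g : bnd l r f -> bnd l r g -> bnd l r (fun y => f y * g y).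
Proof. intros [M1 H1] [M2 H2]. exists (M1 * M2). intros y Hy.
  rewrite Rabs_mult. specialize (H1 y Hy); specialize (H2 y Hy).
  apply Rmult_le_compat; auto; apply Rabs_pos. Qed.
Lemma bnd_div2 l r f : bnd l r f -> bnd l r (fun y => f y / 2).
Proof. intros [M1 H1]. exists (M1 * Rabs (/ 2)). intros y Hy.
  unfold Rdiv. rewrite Rabs_mult. specialize (H1 y Hy).
  apply Rmult_le_compat_r; auto; apply Rabs_pos. Qed.
Lemma bnd_const l r c : bnd l r (fun _ => c).
Proof. exists (Rabs c). intros; lra. Qed.

Lemma is_derive_eq (F : R -> R) x a b : is_derive F x a -> a = b -> is_derive F x b.
Proof. intros H ->; exact H. Qed.
Theorem proposition2p2 (l r : R) (f g : R -> R) (w0 : R) :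
  l < r -> l < w0 < r ->
  Assum_A1 l r f -> Assum_A2 l r g -> Assum_A3 l r f g ->
  exists LH : R,
    forall mu : R,
      let Hm := Hfun l r f g w0 mu in
      C2_R Hm /\
      Rbar_plus (Rbar_plus (sup_abs (fun x => Hm x + mu)) (sup_abs (Derive Hm)))
        (sup_abs (Derive (Derive Hm))) = Finite LH /\
      (forall x y, Rabs (Hm x - Hm y) <= LH * Rabs (x - y)) /\
      (forall x y, Rabs (Derive Hm x - Derive Hm y) <= LH * Rabs (x - y)) /\
      (forall x, Rabs (Hm x) <= LH + Rabs mu).
Proof.
  intros Hlr Hw A1 A2 A3.
  destruct A1 as [f1 [f2 [Hf1 [Hf2 Hf2c]]]].
  destruct A2 as [[g1 [g2 [g3 [Hg1 [Hg2 [Hg3 Hg3c]]]]]] [Hgp Hdiv]].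
  destruct (Hdiv w0 Hw) as [Hdl Hdr].
  destruct A3 as [Ha Hb].
  assert (IcI : forall y, l < y < r -> Icc l r y) by (unfold Icc; intros; lra).
  assert (Df : forall y, l < y < r -> is_derive f y (f1 y))
    by (intros; apply (deriv_within_interior l r); auto).
  assert (Df1 : forall y, l < y < r -> is_derive f1 y (f2 y))
    by (intros; apply (deriv_within_interior l r); auto).
  assert (Dg : forall y, l < y < r -> is_derive g y (g1 y))
    by (intros; apply (deriv_within_interior l r); auto).
  assert (Dg1 : forall y, l < y < r -> is_derive g1 y (g2 y))
    by (intros; apply (deriv_within_interior l r); auto).
  assert (Dg2 : forall y, l < y < r -> is_derive g2 y (g3 y))
    by (intros; apply (deriv_within_interior l r); auto).
  assert (Cf2 : forall y, l < y < r -> continuous f2 y)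
    by (intros; apply (cont_within_interior l r); auto).
  assert (Cg3 : forall y, l < y < r -> continuous g3 y)
    by (intros; apply (cont_within_interior l r); auto).
  assert (Cf : forall y, l < y < r -> continuous f y)
    by (intros; apply (ex_derive_continuous (V:=R_NormedModule)); eexists; eauto).
  assert (Cf1 : forall y, l < y < r -> continuous f1 y)
    by (intros; apply (ex_derive_continuous (V:=R_NormedModule)); eexists; eauto).
  assert (Cg : forall y, l < y < r -> continuous g y)
    by (intros; apply (ex_derive_continuous (V:=R_NormedModule)); eexists; eauto).
  assert (Cg1 : forall y, l < y < r -> continuous g1 y)
    by (intros; apply (ex_derive_continuous (V:=R_NormedModule)); eexists; eauto).
  assert (Cg2 : forall y, l < y < r -> continuous g2 y)
    by (intros; apply (ex_derive_continuous (V:=R_NormedModule)); eexists; eauto).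
  assert (Gn : forall y, l < y < r -> g y <> 0) by (intros y Hy; specialize (Hgp y Hy); lra).
  assert (bIcc : forall F F', (forall x, Icc l r x -> deriv_within l r F x (F' x)) -> bnd l r F).
  { intros F F' HF. destruct (bounded_Icc l r F) as [M HM]. lra.
    intros x Hx. eapply deriv_within_cont; eauto.
    exists M. intros; auto. }
  assert (Bg : bnd l r g) by (eapply bIcc; eauto).
  assert (Bg1 : bnd l r g1) by (eapply bIcc; eauto).
  assert (Bg2 : bnd l r g2) by (eapply bIcc; eauto).
  assert (Bf1 : bnd l r f1) by (eapply bIcc; eauto).
  assert (Bg3 : bnd l r g3).
  { destruct (bounded_Icc l r g3) as [M HM]; auto. lra. exists M; auto. }
  assert (Bf2 : bnd l r f2).
  { destruct (bounded_Icc l r f2) as [M HM]; auto. lra. exists M; auto. }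
  assert (Bq : bnd l r (fun y => f y / g y)).
  { apply bounded_open; auto. intros y Hy. apply cont_div; auto. }
  destruct (Phi_inv_all l r g w0 Hw Cg Hgp Hdl Hdr) as [HS [_ [HC HD]]].
  set (P := Phi_inv l r g w0) in *.
  set (h0 := fun y => f y / g y - / 2 * g1 y).
  set (k1 := fun y => f1 y - f y / g y * g1 y - g y * g2 y / 2).
  set (k2 := fun y => g y * f2 y - (f1 y - f y / g y * g1 y) * g1 y
                - f y / g y * g y * g2 y - (g1 y * g2 y + g y * g3 y) * g y / 2).
  assert (Dh0 : forall y, l < y < r -> is_derive h0 y (k1 y / g y)).
  { intros y Hy. unfold h0.
    eapply is_derive_eq.
    { apply (is_derive_minus (fun y => f y / g y) (fun y => / 2 * g1 y)).
      apply (is_derive_div f g); auto. apply (is_derive_scal g1); auto. }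
    unfold k1. unfold minus, plus, opp, mult, scal, zero, one; simpl. field. auto. }
  assert (Dk1 : forall y, l < y < r -> is_derive k1 y (k2 y / g y)).
  { intros y Hy. unfold k1.
    eapply is_derive_eq.
    { apply (is_derive_minus (fun y => f1 y - f y / g y * g1 y) (fun y => g y * g2 y / 2)).
      apply (is_derive_minus f1 (fun y => f y / g y * g1 y)). auto.
      apply (is_derive_mult (fun y => f y / g y) g1).
      apply (is_derive_div f g); auto. auto. intros; apply Rmult_comm.
      apply (is_derive_div (fun y => g y * g2 y) (fun _ => 2)).
      apply (is_derive_mult g g2); auto. intros; apply Rmult_comm.
      apply is_derive_const. lra. }
    unfold k2. unfold minus, plus, opp, mult, scal, zero, one; simpl. field. auto. }
  assert (HH : forall mu, Hfun l r f g w0 mu = fun x => h0 (P x) - mu).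
  { intros mu. apply functional_extensionality. intros x.
    unfold Hfun, Htilde. fold P. cbv zeta. unfold h0.
    rewrite (is_derive_unique g (P x) (g1 (P x))). reflexivity. apply Dg, HS. }
  assert (DH : forall mu x, is_derive (fun x => h0 (P x) - mu) x (k1 (P x))).
  { intros mu x. eapply is_derive_eq.
    { apply (is_derive_minus (fun x => h0 (P x)) (fun _ => mu)).
      apply (is_derive_comp h0 P). apply Dh0, HS. apply HD. apply is_derive_const. }
    unfold minus, plus, opp, scal; simpl; unfold mult, zero; simpl. field. apply Gn, HS. }
  assert (DDH : forall mu, Derive (fun x => h0 (P x) - mu) = fun x => k1 (P x)).
  { intros mu. apply functional_extensionality. intros x. apply is_derive_unique, DH. }
  assert (DK : forall x, is_derive (fun x => k1 (P x)) x (k2 (P x))).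
  { intros x. eapply is_derive_eq.
    { apply (is_derive_comp k1 P). apply Dk1, HS. apply HD. }
    unfold minus, plus, opp, scal; simpl; unfold mult, zero; simpl. field. apply Gn, HS. }
  assert (DDK : Derive (fun x => k1 (P x)) = fun x => k2 (P x)).
  { apply functional_extensionality. intros x. apply is_derive_unique, DK. }
  assert (Ck2 : forall x, continuous (fun x => k2 (P x)) x).
  { intros x. apply (continuous_comp P k2).
    apply continuity_pt_filterlim. apply HC.
    destruct (HS x) as [Hx _]. unfold k2.
    repeat first [ apply cont_const | apply cont_minus | apply cont_plus
                 | apply cont_div | apply cont_mult | now auto ]. }
  assert (Bh0 : bnd l r h0).
  { unfold h0. repeat first [ exact Bq | apply bnd_minus | apply bnd_mult
     | apply bnd_const | assumption ]. }
  assert (Bk1 : bnd l r k1).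
  { unfold k1. repeat first [ exact Bq | apply bnd_div2 | apply bnd_minus | apply bnd_mult
     | apply bnd_const | assumption ]. }
  assert (Bk2 : bnd l r k2).
  { unfold k2. repeat first [ exact Bq | apply bnd_div2 | apply bnd_minus | apply bnd_plus
     | apply bnd_mult | apply bnd_const | assumption ]. }
  destruct Bh0 as [M0 HM0]. destruct Bk1 as [M1 HM1]. destruct Bk2 as [M2 HM2].
  destruct (sup_abs_fin (fun x => h0 (P x)) M0 (fun x => HM0 (P x) (proj1 (HS x))))
    as [s0 [E0 [S0 P0]]].
  destruct (sup_abs_fin (fun x => k1 (P x)) M1 (fun x => HM1 (P x) (proj1 (HS x))))
    as [s1 [E1 [S1 P1]]].
  destruct (sup_abs_fin (fun x => k2 (P x)) M2 (fun x => HM2 (P x) (proj1 (HS x))))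
    as [s2 [E2 [S2 P2]]].
  exists (s0 + s1 + s2). intros mu. cbv zeta. rewrite HH. rewrite DDH. rewrite DDK.
  rewrite (functional_extensionality (fun x => (fun x0 => h0 (P x0) - mu) x + mu)
    (fun x => h0 (P x))) by (intros; ring).
  rewrite E0, E1, E2. split; [|split; [|split; [|split]]].
  - intros x. split; [|split].
    + eexists. apply DH.
    + rewrite DDH. eexists. apply DK.
    + rewrite DDH, DDK. apply Ck2.
  - reflexivity.
  - intros x y.
    destruct (MVT_cor4 (fun x => h0 (P x) - mu) (fun c => k1 (P c)) y (Rabs (x - y))
      (fun c _ => DH mu c) x (Rle_refl _)) as [c [Hc _]].
    rewrite Hc, Rabs_mult. apply Rmult_le_compat_r. apply Rabs_pos.
    specialize (S1 c). lra.
  - intros x y.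
    destruct (MVT_cor4 (fun x => k1 (P x)) (fun c => k2 (P c)) y (Rabs (x - y))
      (fun c _ => DK c) x (Rle_refl _)) as [c [Hc _]].
    rewrite Hc, Rabs_mult. apply Rmult_le_compat_r. apply Rabs_pos.
    specialize (S2 c). lra.
  - intros x. eapply Rle_trans. apply Rabs_triang. rewrite Rabs_Ropp.
    specialize (S0 x). lra.
Qed.
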